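(* Let $d\geq1$, $q>1$, $\frac dq<\alpha<d$ and $\delta>0$. Then there exists $C>0$ such that for every $R>0$ and every measurable function $u$ on $\mathbb{R}^d$, $$\int_{\mathbb{R}^d\setminus B_R(0)}\frac{|u(x)|}{|x|^{\alpha-\frac dq+\delta}}\,dx\leq \frac{C}{R^\delta}\left\|\tfrac{1}{|x|^\alpha}\star|u|\right\|_{L^q(\mathbb{R}^d)}$$ and $$\int_{B_R(0)}\frac{|u(x)|}{|x|^{\alpha-\frac dq-\delta}}\,dx\leq C R^{\delta}\left\|\tfrac{1}{|x|^\alpha}\star|u|\right\|_{L^q(\mathbb{R}^d)}.$$
   Context: $B_R(0)$ is the open ball of radius $R$ centered at the origin and $\star$ denotes convolution. *)

(* Defs.v *)
From HB Require Import structures.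
From mathcomp Require Import all_boot all_order all_algebra.
From mathcomp Require Import all_classical all_reals all_analysis.
Set Implicit Arguments. Unset Strict Implicit. Unset Printing Implicit Defensive.
Import Order.TTheory GRing.Theory Num.Theory.
Local Open Scope ring_scope.

(* R^d is modelled as d.-tuple R, with the product (= Borel) sigma-algebra
   provided by MathComp-Analysis (measure_tuple_display). *)

Definition enorm (R : realType) (d : nat) (x : d.-tuple R) : R :=
  Num.sqrt (\sum_(i < d) tnth x i ^+ 2).

Definition tsub (R : realType) (d : nat) (x y : d.-tuple R) : d.-tuple R :=
  [tuple tnth x i - tnth y i | i < d].

(* Lebesgue integral over R^d of a NONNEGATIVE measurable function, written as
   the iterated one-dimensional Lebesgue integral (equal to the integral
   against d-dimensional Lebesgue measure by Tonelli's theorem). *)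
Fixpoint lebint (R : realType) (d : nat) : (d.-tuple R -> \bar R) -> \bar R :=
  match d return (d.-tuple R -> \bar R) -> \bar R with
  | 0 => fun f => f [tuple]
  | d'.+1 => fun f =>
      (\int[@lebesgue_measure R]_x lebint (fun t : d'.-tuple R => f (cons_tuple x t)))%E
  end.

Definition riesz_conv (R : realType) (d : nat) (alpha : R)
    (u : d.-tuple R -> R) (x : d.-tuple R) : \bar R :=
  lebint (fun y => (`|u y| / (enorm (tsub x y) `^ alpha))%:E).

Definition Lqnorm (R : realType) (d : nat) (q : R) (f : d.-tuple R -> \bar R) : \bar R :=
  ((lebint (fun x => (f x `^ q)%E)) `^ (q^-1))%E.

(* Main.v *)
Require Import Defs.
From HB Require Import structures.
From mathcomp Require Import all_boot all_order all_algebra.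
From mathcomp Require Import all_classical all_reals all_analysis.
From mathcomp Require Import measurable_realfun.
From mathcomp Require Import ring lra.
Import Order.TTheory GRing.Theory Num.Theory.
Local Open Scope ring_scope.

Module L1.
Local Open Scope ereal_scope.
Section lebint_lemmas.
Context {R : realType}.
Local Notation mu := (@lebesgue_measure R).

Lemma le_int_nm (f g : R -> \bar R) : (forall x, 0 <= f x) -> (forall x, f x <= g x) ->
  \int[mu]_x f x <= \int[mu]_x g x.
Proof.
move=> f0 fg.
have g0 : forall x, 0 <= g x by move=> x; exact: le_trans (f0 x) (fg x).
rewrite (ge0_integralTE mu f0) (ge0_integralTE mu g0).
apply: ge_ereal_sup => _ [h hf <-]; apply: ereal_sup_ubound.
by exists h => // x; exact: le_trans (hf x) (fg x).
Qed.

Lemma lebint_ge0 n (f : n.-tuple R -> \bar R) : (forall x, 0 <= f x) -> 0 <= lebint f.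
Proof.
elim: n f => [|n IH] f f0 /=; first exact: f0.
apply: integral_ge0 => x _; apply: IH => t; exact: f0.
Qed.

Lemma le_lebint n (f g : n.-tuple R -> \bar R) : (forall x, 0 <= f x) ->
  (forall x, f x <= g x) -> lebint f <= lebint g.
Proof.
elim: n f g => [|n IH] f g f0 fg /=; first exact: fg.
apply: le_int_nm => x; first by apply: lebint_ge0 => t; exact: f0.
by apply: IH => t; [exact: f0|exact: fg].
Qed.

Lemma measurable_lebint n {dX} (X : measurableType dX) (F : X -> n.-tuple R -> \bar R) :
  measurable_fun setT (fun p : X * n.-tuple R => F p.1 p.2) ->
  (forall x t, 0 <= F x t) ->
  measurable_fun setT (fun x => lebint (F x)).
Proof.
elim: n dX X F => [|n IH] dX X F mF F0 /=.
  apply: (measurableT_comp (f := fun p : X * 0.-tuple R => F p.1 p.2)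
     (g := fun x => (x, [tuple])) mF).
  by apply: measurable_fun_pair => //; exact: measurable_cst.
pose G := fun (p : X * R) (t : n.-tuple R) => F p.1 (cons_tuple p.2 t).
have mG : measurable_fun setT (fun p : (X * R) * n.-tuple R => G p.1 p.2).
  apply: (measurableT_comp (f := fun p : X * n.+1.-tuple R => F p.1 p.2)
     (g := fun p : (X * R) * n.-tuple R => (p.1.1, cons_tuple p.1.2 p.2)) mF).
  apply: measurable_fun_pair.
    exact: (measurableT_comp (f := fst) (g := fst)).
  apply: measurable_cons.
    exact: (measurableT_comp (f := snd) (g := fst)).
  exact: measurable_snd.
have := IH _ _ G mG (fun p t => F0 _ _).
move=> mH.
have H0 : forall p, 0 <= lebint (G p) by move=> p; apply: lebint_ge0 => t; exact: F0.
exact: (@measurable_fun_fubini_tonelli_F _ _ X _ R mu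
  (fun p : X * R => lebint (G p)) mH H0).
Qed.


Lemma mRconv (f : R -> \bar R) : measurable_fun (setT : set R) f ->
  measurable_fun (setT : set (measurableTypeR R)) f.
Proof. exact. Qed.

Lemma measurable_sec {n} (f : n.+1.-tuple R -> \bar R) : measurable_fun setT f ->
  measurable_fun setT (fun p : R * n.-tuple R => f (cons_tuple p.1 p.2)).
Proof.
move=> mf; apply: (measurableT_comp (f := f)
  (g := fun p : R * n.-tuple R => cons_tuple p.1 p.2) mf).
exact: measurable_cons.
Qed.

Lemma measurable_sec1 {n} (f : n.+1.-tuple R -> \bar R) (x : R) : measurable_fun setT f ->
  measurable_fun setT (fun t : n.-tuple R => f (cons_tuple x t)).
Proof.
move=> mf; apply: (measurableT_comp (f := f)
  (g := fun t : n.-tuple R => cons_tuple x t) mf).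
exact: measurable_cons.
Qed.

Lemma lebintZ n (k : \bar R) (f : n.-tuple R -> \bar R) : 0 <= k ->
  measurable_fun setT f -> (forall x, 0 <= f x) ->
  lebint (fun x => k * f x) = k * lebint f.
Proof.
elim: n f => [|n IH] f k0 mf f0 //=.
rewrite -ge0_integralZl//; last first.
- by move=> x _; apply: lebint_ge0 => t; exact: f0.
- have := @measurable_lebint n _ R (fun (x : R) t => f (cons_tuple x t)) (measurable_sec _ mf) (fun x t => f0 _).
  exact: mRconv.
apply: eq_integral => x _; rewrite IH//; exact: measurable_sec1.
Qed.

Lemma lebint_series n (f : nat -> n.-tuple R -> \bar R) :
  (forall k, measurable_fun setT (f k)) -> (forall k x, 0 <= f k x) ->
  lebint (fun x => \sum_(k <oo) f k x) = \sum_(k <oo) lebint (f k).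
Proof.
elim: n f => [|n IH] f mf f0 //=.
rewrite -integral_nneseries//; last first.
- by move=> k x _; apply: lebint_ge0 => t; exact: f0.
- move=> k.
  have := @measurable_lebint n _ R (fun (x : R) t => f k (cons_tuple x t)) (measurable_sec _ (mf k)) (fun x t => f0 _ _).
  exact: mRconv.
apply: eq_integral => x _; rewrite IH// => k; exact: measurable_sec1.
Qed.

Lemma eq_lebint n (f g : n.-tuple R -> \bar R) : (forall x, f x = g x) -> lebint f = lebint g.
Proof. by move=> fg; congr lebint; apply: funext. Qed.

Lemma lebint0 n : lebint (fun _ : n.-tuple R => 0) = 0.
Proof.
elim: n => [|n IH] //=.
under eq_integral => y _ do rewrite IH.
exact: integral0.
Qed.

Definition box {n} (a b : R) (x : n.-tuple R) := all (fun z : R => (a <= z)%R && (z <= b)%R) x.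

Lemma lebint_box n (a b : R) (c : \bar R) : (a <= b)%R -> 0 <= c ->
  lebint (fun x : n.-tuple R => if box a b x then c else 0) = c * ((b - a) ^+ n)%:E.
Proof.
move=> ab c0; elim: n c c0 => [|n IH] c c0 /=; first by rewrite expr0 mule1.
have inner : forall y : R, lebint (fun t : n.-tuple R => if box a b (cons_tuple y t) then c else 0)
     = (c * ((b - a) ^+ n)%:E) * (\1_(`[a, b]%classic : set R) y)%:E.
  move=> y; rewrite indicE.
  have [Hy|Hy] := boolP ((a <= y)%R && (y <= b)%R).
    rewrite mem_set ?mule1; last by rewrite /= in_itv /= Hy.
    rewrite -IH//; apply: eq_lebint => t.
    have Hb : box a b (cons_tuple y t) = box a b t by rewrite /box /= Hy.
    by rewrite Hb.
  rewrite memNset ?mule0; last by rewrite /= in_itv /= (negbTE Hy).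
  rewrite -[RHS](lebint0 n); apply: eq_lebint => t.
  have Hb : box a b (cons_tuple y t) = false.
    by rewrite /box /=; apply/negbTE; rewrite negb_and Hy.
  by rewrite Hb.
under eq_integral => y _ do rewrite inner.
rewrite ge0_integralZl//.
all: try (by apply/measurable_EFinP; apply: measurable_indic).
all: try (by apply: mule_ge0 => //; rewrite lee_fin exprn_ge0// subr_ge0).
all: try (by move=> x _; rewrite lee_fin indicE).
rewrite integral_indic// setIT.
have Hm := @lebesgue_measure_itv R `[a, b].
have Hm' : lebesgue_measure (`[a, b]%classic : set R) = (b - a)%:E.
  rewrite Hm /= lte_fin; case: ltgtP ab => // -> _.
  by rewrite subrr.
apply: (@eq_trans _ _ (c * ((b-a)^+n)%:E * (b-a)%:E)); first by congr (_ * _); exact: Hm'.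
by rewrite -muleA -EFinM exprSr.
Qed.

End lebint_lemmas.
End L1.
Import L1.

Section norms.
Context {R : realType} {d : nat}.
Implicit Types x y : d.-tuple R.

Definition sq x := \sum_(i < d) tnth x i ^+ 2.

Lemma sq_ge0 x : 0 <= sq x.
Proof. by apply: sumr_ge0 => i _; exact: sqr_ge0. Qed.

Lemma enormE x : enorm x = Num.sqrt (sq x).
Proof. by []. Qed.

Lemma enorm_ge0 x : 0 <= enorm x.
Proof. exact: sqrtr_ge0. Qed.

Lemma enorm_le x t : 0 <= t -> sq x <= t ^+ 2 -> enorm x <= t.
Proof.
move=> t0 h; rewrite enormE -(ger0_norm t0) -sqrtr_sqr ler_sqrt//; exact: sqr_ge0.
Qed.

Lemma enorm_ge x t : 0 <= t -> t ^+ 2 <= sq x -> t <= enorm x.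
Proof.
move=> t0 h; rewrite enormE -(ger0_norm t0) -sqrtr_sqr ler_sqrt//; exact: sq_ge0.
Qed.

Lemma enorm_sqr x : enorm x ^+ 2 = sq x.
Proof. by rewrite enormE sqr_sqrtr// sq_ge0. Qed.

Lemma sq_tsub x y : sq (tsub x y) <= 2 * sq x + 2 * sq y.
Proof.
rewrite /sq !mulr_sumr -big_split /=; apply: ler_sum => i _.
rewrite /tsub tnth_map tnth_ord_tuple.
set a := tnth x i; set b := tnth y i.
have := sqr_ge0 (a + b); nra.
Qed.

Lemma tsub_le x y : enorm (tsub x y) <= Num.sqrt 2 * Num.sqrt (enorm x ^+ 2 + enorm y ^+ 2).
Proof.
rewrite -sqrtrM// enormE ler_sqrt; last by rewrite mulr_ge0// addr_ge0// sqr_ge0.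
by rewrite !enorm_sqr mulrDr; exact: sq_tsub.
Qed.

Lemma tsub_le2 x y m : enorm x <= m -> enorm y <= m -> enorm (tsub x y) <= 2 * m.
Proof.
move=> hx hy; have m0 : 0 <= m by exact: le_trans (enorm_ge0 x) hx.
apply: enorm_le; first by rewrite mulr_ge0.
apply: (le_trans (sq_tsub x y)); rewrite -!enorm_sqr.
have hx2 : enorm x ^+ 2 <= m ^+ 2 by rewrite ler_sqr// ?nnegrE ?enorm_ge0.
have hy2 : enorm y ^+ 2 <= m ^+ 2 by rewrite ler_sqr// ?nnegrE ?enorm_ge0.
rewrite exprMn; nra.
Qed.

Lemma tsub_eq0 x y : enorm (tsub x y) = 0 -> enorm x = enorm y.
Proof.
move=> /eqP; rewrite enormE sqrtr_eq0 => h.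
have h0 : sq (tsub x y) = 0 by apply/eqP; rewrite eq_le h sq_ge0.
have e i : tnth x i = tnth y i.
  have := psumr_eq0P (P := xpredT) (fun i _ => sqr_ge0 (tnth (tsub x y) i)) h0 (i := i).
  rewrite /tsub tnth_map tnth_ord_tuple => /(_ isT) /eqP.
  by rewrite sqrf_eq0 subr_eq0 => /eqP.
by rewrite !enormE /sq; congr Num.sqrt; apply: eq_bigr => i _; rewrite e.
Qed.

End norms.

Section gen.
Context {R : realType}.

Lemma powR_inv (x a : R) : 0 < x -> (x^-1) `^ a = (x `^ a)^-1.
Proof.
move=> x0; rewrite -powR_inv1 ?(ltW x0)// -powRrM mulN1r powRN//.
Qed.

Lemma powR_exprn (x a : R) k : 0 <= x -> (x ^+ k) `^ a = (x `^ a) ^+ k.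
Proof.
move=> x0; rewrite -powR_mulrn// -powRrM mulrC powRrM powR_mulrn//; exact: powR_ge0.
Qed.

Lemma bracket (m z e : R) : 0 < m -> m <= z -> z <= 2 * m -> z `^ e <= m `^ e + (2 * m) `^ e.
Proof.
move=> m0 mz z2m; have z0 : 0 < z by exact: lt_le_trans mz.
have [e0|e0] := leP 0 e.
  apply: (@le_trans _ _ ((2 * m) `^ e)); last by rewrite lerDr powR_ge0.
  by apply: ge0_ler_powR; rewrite ?nnegrE//; lra.
apply: (@le_trans _ _ (m `^ e)); last by rewrite lerDl powR_ge0.
have Hz : z `^ e = (z `^ (- e))^-1 by rewrite powRN invrK.
have Hm : m `^ e = (m `^ (- e))^-1 by rewrite powRN invrK.
rewrite Hz Hm lef_pV2 ?posrE ?powR_gt0//.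
by apply: ge0_ler_powR; rewrite ?nnegrE//; lra.
Qed.

Lemma series_bound (A rho : R) : 0 <= A -> 0 < rho < 1 ->
  (\sum_(k <oo) (A * rho ^+ k)%:E <= (A / (1 - rho))%:E)%E.
Proof.
move=> A0 /andP[r0 r1].
apply: lime_le.
  by apply: is_cvg_nneseries => k _; rewrite lee_fin mulr_ge0// exprn_ge0// ltW.
apply: nearW => n /=.
rewrite sumEFin lee_fin.
have := @geometric_le_lim R n A rho A0 r0.
rewrite ger0_norm ?(ltW r0)// => /(_ r1).
by rewrite /series /= big_mkord.
Qed.

Lemma term_le_series (f : nat -> \bar R) k : (forall j, 0 <= f j)%E ->
  (f k <= \sum_(j <oo) f j)%E.
Proof.
move=> f0; apply: (@le_trans _ _ (\sum_(0 <= j < k.+1) f j)%E).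
  rewrite big_nat_recr//= -[X in (X <= _)%E]add0e leeD2r//.
  by apply: sume_ge0 => j _.
exact: nneseries_lim_ge.
Qed.

Lemma exists_pow2 (x : R) : exists k, x < 2 ^+ k.
Proof. by exists (Num.Def.archi_bound x); apply: upper_nthrootP. Qed.

Lemma shell_up (r z : R) : 0 < r -> r <= z -> exists k, r * 2 ^+ k <= z < r * 2 ^+ k * 2.
Proof.
move=> r0 rz.
have ex : exists k, z < r * 2 ^+ k.+1.
  have [k hk] := exists_pow2 (z / r); exists k.
  rewrite exprS mulrCA; apply: (lt_le_trans (y := r * 2 ^+ k)).
    by rewrite -ltr_pdivrMl// mulrC.
  by rewrite ler_peMl ?mulr_ge0 ?exprn_ge0 ?(ltW r0)// ler1n.
case: (ex_minnP ex) => k hk hmin; exists k; apply/andP; split; last by rewrite -mulrA -exprSr.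
case: k hk hmin => [|k] hk hmin; first by rewrite expr0 mulr1.
rewrite leNgt; apply/negP => hlt.
by have := hmin _ hlt; rewrite ltnn.
Qed.

Lemma shell_down (r z : R) : 0 < r -> 0 < z -> z < r ->
  exists k, r * 2^-1 ^+ k / 2 <= z < r * 2^-1 ^+ k.
Proof.
move=> r0 z0 zr.
have ex : exists k, r * 2^-1 ^+ k.+1 <= z.
  have [k hk] := exists_pow2 (r / z); exists k.
  rewrite exprVn; apply: ltW; rewrite ltr_pdivrMr ?exprn_gt0//.
  apply: (lt_le_trans (y := z * 2 ^+ k)).
    by rewrite -ltr_pdivrMl// mulrC.
  by rewrite ler_pM2l// exprS ler_peMl ?exprn_ge0// ler1n.
case: (ex_minnP ex) => k hk hmin; exists k; apply/andP; split.
  by rewrite exprSr mulrA in hk.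
case: k hk hmin => [|k] hk hmin; first by rewrite expr0 mulr1.
rewrite ltNge; apply/negP => hlt.
by have := hmin _ hlt; rewrite ltnn.
Qed.

End gen.

Section meas.
Context {R : realType} {d : nat}.

Lemma measurable_enorm : measurable_fun setT (@enorm R d).
Proof.
have h1 := continuous_measurable_fun (@sqrt_continuous R).
have h2 : measurable_fun setT (fun x : d.-tuple R => \sum_(i < d) tnth x i ^+ 2).
  apply: measurable_sum => i; apply: measurable_funX; exact: measurable_tnth.
exact: (measurableT_comp h1 h2).
Qed.

Lemma box_sq_le (a b : R) (x : d.-tuple R) : 0 <= a -> box a b x -> sq x <= d%:R * b ^+ 2.
Proof.
move=> a0 /allP hx; rewrite /sq.
apply: (@le_trans _ _ (\sum_(i < d) b ^+ 2)); last by rewrite sumr_const card_ord mulr_natl.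
apply: ler_sum => i _; have /andP[h1 h2] := hx _ (mem_tnth i x).
rewrite ler_sqr ?nnegrE//; [exact: le_trans h1|exact: le_trans a0 (le_trans h1 h2)].
Qed.

Lemma box_sq_ge (a b : R) (x : d.-tuple R) : (0 < d)%N -> 0 <= a -> box a b x -> a ^+ 2 <= sq x.
Proof.
move=> d0 a0 /allP hx; rewrite /sq.
case: d x hx d0 => // n x hx _.
rewrite big_ord_recl; have /andP[h1 h2] := hx _ (mem_tnth ord0 x).
have : 0 <= \sum_(i < n) tnth x (lift ord0 i) ^+ 2 by apply: sumr_ge0 => i _; exact: sqr_ge0.
have : a ^+ 2 <= tnth x ord0 ^+ 2 by rewrite ler_sqr ?nnegrE//; exact: le_trans h1.
lra.
Qed.

End meas.

Section main.
Context {R : realType} {d : nat} (q alpha delta : R) (u : d.-tuple R -> R).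
Hypotheses (d1 : (1 <= d)%N) (q1 : 1 < q) (al0 : 0 < alpha) (de0 : 0 < delta)
  (mu_ : measurable_fun setT u).

Local Notation I := (riesz_conv alpha u).
Definition P := lebint (fun x => (I x `^ q)%E).

Definition g (t : R) (y : d.-tuple R) := if t <= enorm y then `|u y| / enorm y `^ alpha else 0.
Definition h (t : R) (y : d.-tuple R) := if enorm y < t then `|u y| else 0.

Lemma g_ge0 t y : 0 <= g t y.
Proof. by rewrite /g; case: ifP => // _; rewrite divr_ge0// powR_ge0. Qed.

Lemma h_ge0 t y : 0 <= h t y.
Proof. by rewrite /h; case: ifP. Qed.

Lemma measurable_g t : measurable_fun setT (fun y => (g t y)%:E).
Proof.
apply/measurable_EFinP; rewrite /g.
apply: measurable_fun_ifT.
- apply: measurable_fun_ler => //; exact: measurable_enorm.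
- have -> : (fun y => `|u y| / enorm y `^ alpha) = (fun y => `|u y| * enorm y `^ (- alpha)).
    by apply: funext => y; rewrite powRN.
  apply: measurable_funM.
    exact: (measurableT_comp (@normr_measurable R setT) mu_).
  exact: (measurableT_comp (measurable_powR _) measurable_enorm).
- exact: measurable_cst.
Qed.

Lemma measurable_h t : measurable_fun setT (fun y => (h t y)%:E).
Proof.
apply/measurable_EFinP; rewrite /h.
apply: measurable_fun_ifT.
- apply: measurable_fun_ltr => //; exact: measurable_enorm.
- exact: (measurableT_comp (@normr_measurable R setT) mu_).
- exact: measurable_cst.
Qed.

Lemma I_ge0 x : (0 <= I x)%E.
Proof. by apply: lebint_ge0 => y; rewrite lee_fin divr_ge0 ?powR_ge0. Qed.

Lemma boxbound (a b v : R) : 0 <= a -> a <= b -> 0 <= v ->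
  (forall x, box a b x -> (v%:E <= I x)%E) -> ((v `^ q * (b - a) ^+ d)%:E <= P)%E.
Proof.
move=> a0 ab v0 hI.
apply: (@le_trans _ _ (lebint (fun x : d.-tuple R => if box a b x then (v `^ q)%:E else 0%E))).
  by rewrite lebint_box// ?lee_fin ?powR_ge0// EFinM.
apply: le_lebint => x; first by case: ifP => // _; rewrite lee_fin powR_ge0.
case: ifP => hb; last exact: poweR_ge0.
rewrite -poweR_EFin; apply: gt0_ler_poweR; first exact: (le_trans ler01 (ltW q1)).
- by rewrite in_itv /= lee_fin v0 leey.
- by rewrite in_itv /= I_ge0 leey.
exact: hI.
Qed.

Lemma kernel_lb (a e rho : R) : 0 <= a -> 0 < e -> e <= rho -> a / rho `^ alpha <= a / e `^ alpha.
Proof.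
move=> a0 e0 er; have rho0 : 0 < rho by exact: lt_le_trans er.
apply: ler_wpM2l => //; rewrite lef_pV2 ?posrE ?powR_gt0//.
by apply: ge0_ler_powR; rewrite ?nnegrE//; [exact: ltW al0|exact: ltW e0|exact: ltW rho0].
Qed.


Lemma dR1 : 1 <= (d%:R : R).
Proof. by rewrite ler1n. Qed.

Lemma A1 t w : 0 < t -> 0 <= w -> (w%:E <= lebint (fun y => (g t y)%:E))%E ->
  forall x, box 0 (t / (2 * d%:R)) x -> ((2 `^ (- alpha) * w)%:E <= I x)%E.
Proof.
move=> t0 w0 hw x hx.
have d1' := dR1.
have ex : enorm x <= t / 2.
  apply: enorm_le; first by lra.
  apply: (le_trans (box_sq_le _ _ _ (lexx 0) hx)).
  set s := t / (2 * d%:R).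
  have sd : s * d%:R = t / 2 by rewrite /s; field; lra.
  have s0 : 0 <= s by rewrite /s divr_ge0//; lra.
  have : d%:R * s ^+ 2 <= (s * d%:R) ^+ 2 by nra.
  by rewrite sd.
apply: (@le_trans _ _ ((2 `^ (- alpha))%:E * lebint (fun y => (g t y)%:E))%E).
  by rewrite EFinM lee_pmul2l// lte_fin powR_gt0.
rewrite -lebintZ ?lee_fin ?powR_ge0//; last first.
- by move=> y; rewrite lee_fin g_ge0.
- exact: measurable_g.
apply: le_lebint => y; first by rewrite -EFinM lee_fin mulr_ge0 ?powR_ge0 ?g_ge0.
rewrite -EFinM lee_fin /g; case: ifP => hy; last by rewrite mulr0 divr_ge0 ?powR_ge0.
have ey0 : 0 <= enorm y by exact: enorm_ge0.
have hxy : enorm (tsub x y) <= 2 * enorm y.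
  by apply: tsub_le2 => //; lra.
have hxy0 : 0 < enorm (tsub x y).
  rewrite lt_neqAle enorm_ge0 andbT; apply/eqP => /esym /tsub_eq0 hxy'.
  by move: ex; rewrite hxy'; lra.
apply: (le_trans _ (kernel_lb _ _ _ (normr_ge0 (u y)) hxy0 hxy)).
rewrite powRM ?powRN; [|lra|lra].
by rewrite invfM mulrCA.
Qed.

Lemma A2 t w : 0 < t -> 0 <= w -> (w%:E <= lebint (fun y => (h t y)%:E))%E ->
  forall x, box t (2 * t) x -> (((4 * d%:R * t) `^ (- alpha) * w)%:E <= I x)%E.
Proof.
move=> t0 w0 hw x hx.
have d1' := dR1.
have d0 : (0 < d)%N by [].
have ex1 : t <= enorm x.
  by apply: enorm_ge; [lra|exact: (box_sq_ge _ _ _ d0 (ltW t0) hx)].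
have ex2 : enorm x <= 2 * d%:R * t.
  apply: enorm_le; first by nra.
  apply: (le_trans (box_sq_le _ _ _ (ltW t0) hx)).
  nra.
have p4 : 0 < 4 * d%:R * t by nra.
apply: (@le_trans _ _ (((4 * d%:R * t) `^ (- alpha))%:E * lebint (fun y => (h t y)%:E))%E).
  by rewrite EFinM lee_pmul2l// lte_fin (powR_gt0 _ p4).
rewrite -lebintZ ?lee_fin ?powR_ge0//; last first.
- by move=> y; rewrite lee_fin h_ge0.
- exact: measurable_h.
apply: le_lebint => y; first by rewrite -EFinM lee_fin mulr_ge0 ?powR_ge0 ?h_ge0.
rewrite -EFinM lee_fin /h; case: ifP => hy; last by rewrite mulr0 divr_ge0 ?powR_ge0.
have ey0 : 0 <= enorm y by exact: enorm_ge0.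
have hxy : enorm (tsub x y) <= 4 * d%:R * t.
  have hyx : enorm y <= enorm x by lra.
  apply: (le_trans (tsub_le2 _ _ _ (lexx (enorm x)) hyx)).
  lra.
have hxy0 : 0 < enorm (tsub x y).
  rewrite lt_neqAle enorm_ge0 andbT; apply/eqP => /esym /tsub_eq0 hxy'.
  by move: ex1; rewrite hxy'; lra.
apply: (le_trans _ (kernel_lb _ _ _ (normr_ge0 (u y)) hxy0 hxy)).
by rewrite powRN mulrC.
Qed.


Lemma ub_of_real (X : \bar R) (B : R) : (0 <= X)%E -> 0 <= B ->
  (forall w, 0 <= w -> (w%:E <= X)%E -> w <= B) -> (X <= B%:E)%E.
Proof.
case: X => [r| |] X0 B0 H.
- by rewrite lee_fin; apply: H => //; rewrite -lee_fin.
- have hh := H (B + 1) (addr_ge0 B0 ler01) (leey _); clear H X0; exfalso; lra.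
- by [].
Qed.

Lemma invert (v V p : R) : 0 <= v -> 0 < V -> v `^ q * V <= p -> v <= (p / V) `^ q^-1.
Proof.
move=> v0 V0 hp.
have q0 : 0 < q by exact: lt_trans ltr01 q1.
have -> : v = (v `^ q) `^ q^-1 by rewrite -powRrM mulfV ?gt_eqF// powRr1.
apply: ge0_ler_powR; rewrite ?nnegrE ?invr_ge0 ?powR_ge0 ?(ltW q0)//.
  by rewrite divr_ge0 ?(ltW V0)//; exact: le_trans (mulr_ge0 (powR_ge0 _ _) (ltW V0)) hp.
by rewrite ler_pdivlMr.
Qed.

Lemma Fbound p t : P = p%:E -> 0 < t ->
  (lebint (fun y => (g t y)%:E) <= (2 `^ alpha * (p / (t / (2 * d%:R)) ^+ d) `^ q^-1)%:E)%E.
Proof.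
move=> Pp t0; have d1' := dR1.
have s0 : 0 < t / (2 * d%:R) by apply: divr_gt0 => //; lra.
apply: ub_of_real.
- by apply: lebint_ge0 => y; rewrite lee_fin g_ge0.
- by rewrite mulr_ge0 ?powR_ge0.
move=> w w0 hw.
have hb := boxbound _ _ _ (lexx 0) (ltW s0) (mulr_ge0 (powR_ge0 2 (- alpha)) w0) (A1 _ _ t0 w0 hw).
rewrite Pp lee_fin subr0 in hb.
have := invert _ _ _ (mulr_ge0 (powR_ge0 2 (- alpha)) w0) (exprn_gt0 d s0) hb.
have h2 : 2 `^ alpha * 2 `^ (- alpha) = 1 :> R.
  by rewrite powRN mulfV// gt_eqF// powR_gt0.
move=> hv; apply: (@le_trans _ _ (2 `^ alpha * (2 `^ (- alpha) * w))).
  by rewrite mulrA h2 mul1r.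
by apply: ler_wpM2l => //; exact: powR_ge0.
Qed.

Lemma Gbound p t : P = p%:E -> 0 < t ->
  (lebint (fun y => (h t y)%:E) <= ((4 * d%:R * t) `^ alpha * (p / t ^+ d) `^ q^-1)%:E)%E.
Proof.
move=> Pp t0; have d1' := dR1.
have p4 : 0 < 4 * d%:R * t by nra.
apply: ub_of_real.
- by apply: lebint_ge0 => y; rewrite lee_fin h_ge0.
- by rewrite mulr_ge0 ?powR_ge0.
move=> w w0 hw.
have t2 : t <= 2 * t by lra.
have hb := boxbound _ _ _ (ltW t0) t2 (mulr_ge0 (powR_ge0 (4 * d%:R * t) (- alpha)) w0) (A2 _ _ t0 w0 hw).
have e : 2 * t - t = t by lra.
rewrite Pp lee_fin e in hb.
have := invert _ _ _ (mulr_ge0 (powR_ge0 _ (- alpha)) w0) (exprn_gt0 d t0) hb.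
have h2 : (4 * d%:R * t) `^ alpha * (4 * d%:R * t) `^ (- alpha) = 1 :> R.
  by rewrite powRN mulfV// gt_eqF// powR_gt0.
move=> hv; apply: (@le_trans _ _ ((4 * d%:R * t) `^ alpha * ((4 * d%:R * t) `^ (- alpha) * w))).
  by rewrite mulrA h2 mul1r.
by apply: ler_wpM2l => //; exact: powR_ge0.
Qed.


Definition D : R := d%:R / q.
Definition rho : R := 2 `^ (- delta).

Lemma rho_bounds : 0 < rho < 1.
Proof.
rewrite /rho powR_gt0 //= powRN invf_lt1 ?powR_gt0//.
have h1 : 1 <= 2 `^ delta :> R.
  by rewrite -[X in X <= _](powRr0 2); apply: ler_powR; [rewrite ler1n|exact: ltW].
rewrite lt_neqAle h1 andbT eq_sym powR_eq1 negb_or.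
by rewrite (gt_eqF de0) /= negb_or ltNge ler0n andbT; apply/negP => /eqP; lra.
Qed.

Lemma powR_mulE (x a b : R) : 0 < x -> x `^ a * x `^ b = x `^ (a + b).
Proof. by move=> x0; rewrite powRD//; apply/implyP => _; rewrite gt_eqF.  Qed.

Lemma powR_divE (x a b : R) : 0 < x -> x `^ a / x `^ b = x `^ (a - b).
Proof. by move=> x0; rewrite powRB//; apply/implyP => _; rewrite gt_eqF. Qed.

Lemma pow_div_q (p s : R) : 0 <= p -> 0 < s ->
  (p / s ^+ d) `^ q^-1 = p `^ q^-1 / s `^ D.
Proof.
move=> p0 s0.
rewrite powRM ?invr_ge0 ?exprn_ge0 ?(ltW s0)// powR_inv ?exprn_gt0//.
by rewrite /D -powR_mulrn ?(ltW s0)// -powRrM.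
Qed.

Lemma calc1 (m p : R) : 0 < m -> 0 <= p ->
  (m `^ (D - delta) + (2 * m) `^ (D - delta)) * (2 `^ alpha * (p / (m / (2 * d%:R)) ^+ d) `^ q^-1)
  = 2 `^ alpha * (2 * d%:R) `^ D * p `^ q^-1 * (1 + 2 `^ (D - delta)) * m `^ (- delta).
Proof.
move=> m0 p0; have d1' := dR1.
have d0 : 0 < 2 * d%:R :> R by lra.
have s0 : 0 < m / (2 * d%:R) by apply: divr_gt0.
have e1 : m `^ (D - delta) / m `^ D = m `^ (- delta).
  by rewrite powR_divE//; congr (_ `^ _); ring.
have di : 0 <= (2 * d%:R)^-1 :> R by rewrite invr_ge0 ltW.
rewrite pow_div_q// (@powRM _ m (2 * d%:R)^-1 D (ltW m0) di) powR_inv//.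
rewrite (@powRM _ 2 m (D - delta) _ (ltW m0)); last by lra.
rewrite -e1 invfM invrK; ring.
Qed.

Lemma calc2 (m p : R) : 0 < m -> 0 <= p ->
  (m `^ (- (alpha - D - delta)) + (m / 2) `^ (- (alpha - D - delta))) *
     ((4 * d%:R * m) `^ alpha * (p / m ^+ d) `^ q^-1)
  = (4 * d%:R) `^ alpha * p `^ q^-1 * (1 + 2 `^ (alpha - D - delta)) * m `^ delta.
Proof.
move=> m0 p0; have d1' := dR1.
have d0 : 0 < 4 * d%:R :> R by lra.
set g' := alpha - D - delta.
have e1 : m `^ (- g') * m `^ alpha / m `^ D = m `^ delta.
  by rewrite powR_mulE// powR_divE//; congr (_ `^ _); rewrite /g'; ring.
have hi : 0 <= 2^-1 :> R by rewrite invr_ge0.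
rewrite pow_div_q// (@powRM _ (4 * d%:R) m alpha (ltW d0) (ltW m0)).
rewrite (@powRM _ m 2^-1 _ (ltW m0) hi).
rewrite powR_inv// (powRN 2 g') invrK -e1; ring.
Qed.

Lemma calc_up (r s : R) k : 0 < r -> (r * 2 ^+ k) `^ s = r `^ s * (2 `^ s) ^+ k.
Proof.
by move=> r0; rewrite powRM ?(ltW r0) ?exprn_ge0// powR_exprn.
Qed.

Lemma calc_down (r : R) k : 0 < r -> (r * 2^-1 ^+ k) `^ delta = r `^ delta * rho ^+ k.
Proof.
move=> r0; rewrite powRM ?(ltW r0) ?exprn_ge0 ?invr_ge0// powR_exprn ?invr_ge0//.
by rewrite powR_inv// /rho powRN.
Qed.


Lemma P_ge0 : (0 <= P)%E.
Proof. by apply: lebint_ge0 => x; exact: poweR_ge0. Qed.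

Lemma B1 p r : P = p%:E -> 0 < r ->
  (lebint (fun x => (if r <= enorm x
                     then `|u x| / (enorm x `^ (alpha - d%:R / q + delta)) else 0)%:E)
   <= ((2 `^ alpha * (2 * d%:R) `^ D * p `^ q^-1 * (1 + 2 `^ (D - delta)) * r `^ (- delta))
         / (1 - rho))%:E)%E.
Proof.
move=> Pp r0.
have p0 : 0 <= p by rewrite -lee_fin -Pp P_ge0.
set K := 2 `^ alpha * (2 * d%:R) `^ D * p `^ q^-1 * (1 + 2 `^ (D - delta)).
have K0 : 0 <= K by rewrite /K !mulr_ge0 ?powR_ge0// addr_ge0 ?powR_ge0.
pose m k := r * 2 ^+ k.
have m0 k : 0 < m k by rewrite /m mulr_gt0// exprn_gt0.
pose c k := m k `^ (D - delta) + (2 * m k) `^ (D - delta).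
have c0 k : 0 <= c k by rewrite /c addr_ge0 ?powR_ge0.
pose f k y := ((c k)%:E * (g (m k) y)%:E)%E.
have f0 k y : (0 <= f k y)%E by rewrite /f -EFinM lee_fin mulr_ge0 ?g_ge0.
apply: (@le_trans _ _ (lebint (fun y => (\sum_(k <oo) f k y)%E))).
  apply: le_lebint => y.
    by case: ifP => // _; rewrite lee_fin divr_ge0 ?powR_ge0.
  case: ifP => hy; last by apply: nneseries_ge0 => k _ _.
  have [k /andP[hk1 hk2]] := shell_up _ _ r0 hy.
  apply: le_trans (term_le_series (f^~ y) k (fun j => f0 j y)).
  have y0 : 0 < enorm y by exact: lt_le_trans hy.
  rewrite /f /g hk1 -EFinM lee_fin.
  have -> : alpha - d%:R / q + delta = alpha - (D - delta) by rewrite /D; ring.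
  rewrite -powR_divE// invf_div.
  have -> : `|u y| * (enorm y `^ (D - delta) / enorm y `^ alpha)
     = enorm y `^ (D - delta) * (`|u y| / enorm y `^ alpha) by ring.
  apply: ler_wpM2r; first by rewrite divr_ge0 ?powR_ge0.
  apply: bracket => //; rewrite mulrC; exact: ltW.
rewrite lebint_series; last 2 first.
- by move=> k; apply: measurable_funeM; exact: measurable_g.
- by move=> k x; exact: f0.
have Hf k : (lebint (f k) <= (K * r `^ (- delta) * rho ^+ k)%:E)%E.
  rewrite /f lebintZ ?lee_fin//; last 2 first.
  - exact: measurable_g.
  - by move=> y; rewrite lee_fin g_ge0.
  apply: (@le_trans _ _ ((c k)%:E * (2 `^ alpha * (p / (m k / (2 * d%:R)) ^+ d) `^ q^-1)%:E)%E).
    by apply: lee_wpmul2l; [rewrite lee_fin|exact: Fbound].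
  rewrite -EFinM lee_fin /c calc1// /m calc_up// /rho -/K.
  by rewrite !mulrA.
apply: (le_trans (lee_nneseries _ _)).
- by move=> k _ _; apply: lebint_ge0 => y; exact: f0.
- by move=> k _; exact: Hf.
apply: series_bound; first by rewrite mulr_ge0 ?powR_ge0.
exact: rho_bounds.
Qed.


Lemma B2 p r : P = p%:E -> 0 < r ->
  (lebint (fun x => (if enorm x < r
                     then `|u x| / (enorm x `^ (alpha - d%:R / q - delta)) else 0)%:E)
   <= (((4 * d%:R) `^ alpha * p `^ q^-1 * (1 + 2 `^ (alpha - D - delta)) * r `^ delta)
         / (1 - rho))%:E)%E.
Proof.
move=> Pp r0.
have p0 : 0 <= p by rewrite -lee_fin -Pp P_ge0.
have gaE : alpha - d%:R / q - delta = alpha - D - delta by [].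
rewrite gaE; set ga := alpha - D - delta.
set K := (4 * d%:R) `^ alpha * p `^ q^-1 * (1 + 2 `^ ga).
have K0 : 0 <= K by rewrite /K !mulr_ge0 ?powR_ge0// addr_ge0 ?powR_ge0.
pose m k := r * 2^-1 ^+ k.
have m0 k : 0 < m k by rewrite /m mulr_gt0// exprn_gt0// invr_gt0.
pose c k := m k `^ (- ga) + (m k / 2) `^ (- ga).
have c0 k : 0 <= c k by rewrite /c addr_ge0 ?powR_ge0.
pose f k y := ((c k)%:E * (h (m k) y)%:E)%E.
have f0 k y : (0 <= f k y)%E by rewrite /f -EFinM lee_fin mulr_ge0 ?h_ge0.
apply: (@le_trans _ _ (lebint (fun y => (\sum_(k <oo) f k y)%E))).
  apply: le_lebint => y.
    by case: ifP => // _; rewrite lee_fin divr_ge0 ?powR_ge0.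
  case: ifP => hy; last by apply: nneseries_ge0 => k _ _.
  have [y0|y0] := eqVneq (enorm y) 0.
    have [g0|g0] := eqVneq ga 0.
      apply: le_trans (term_le_series (f^~ y) 0 (fun j => f0 j y)).
      rewrite /f /h /c /m expr0 mulr1 hy g0 oppr0 !powRr0 -EFinM lee_fin divr1.
      by rewrite mulrDl mul1r lerDl normr_ge0.
    rewrite y0 powR0// invr0 mulr0.
    by apply: nneseries_ge0 => k _ _.
  have ypos : 0 < enorm y by rewrite lt_neqAle eq_sym y0 enorm_ge0.
  have [k /andP[hk1 hk2]] := shell_down _ _ r0 ypos hy.
  apply: le_trans (term_le_series (f^~ y) k (fun j => f0 j y)).
  rewrite /f /h hk2 -EFinM lee_fin -powRN mulrC.
  apply: ler_wpM2r => //.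
  have mk2 : 0 < m k / 2 by rewrite divr_gt0.
  have e2 : 2 * (m k / 2) = m k by field.
  have hk3 : enorm y <= 2 * (m k / 2) by rewrite e2; exact: ltW.
  have := bracket _ _ (- ga) mk2 hk1 hk3.
  by rewrite e2 /c addrC.
rewrite lebint_series; last 2 first.
- by move=> k; apply: measurable_funeM; exact: measurable_h.
- by move=> k x; exact: f0.
have Hf k : (lebint (f k) <= (K * r `^ delta * rho ^+ k)%:E)%E.
  rewrite /f lebintZ ?lee_fin//; last 2 first.
  - exact: measurable_h.
  - by move=> y; rewrite lee_fin h_ge0.
  apply: (@le_trans _ _ ((c k)%:E * ((4 * d%:R * m k) `^ alpha * (p / m k ^+ d) `^ q^-1)%:E)%E).
    by apply: lee_wpmul2l; [rewrite lee_fin|exact: Gbound].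
  rewrite -EFinM lee_fin /c calc2// /m calc_down// -/K.
  by rewrite !mulrA.
apply: (le_trans (lee_nneseries _ _)).
- by move=> k _ _; apply: lebint_ge0 => y; exact: f0.
- by move=> k _; exact: Hf.
apply: series_bound; first by rewrite mulr_ge0 ?powR_ge0.
exact: rho_bounds.
Qed.


Definition C1 : R := 2 `^ alpha * (2 * d%:R) `^ D * (1 + 2 `^ (D - delta)) / (1 - rho).
Definition C2 : R := (4 * d%:R) `^ alpha * (1 + 2 `^ (alpha - D - delta)) / (1 - rho).

Lemma C1_ge0 : 0 <= C1.
Proof.
have := rho_bounds => /andP[_ h]; rewrite /C1 divr_ge0 ?subr_ge0 ?(ltW h)//.
all: try by rewrite !mulr_ge0 ?powR_ge0// addr_ge0 ?powR_ge0.
Qed.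

Lemma C2_ge0 : 0 <= C2.
Proof.
have := rho_bounds => /andP[_ h]; rewrite /C2 divr_ge0 ?subr_ge0 ?(ltW h)//.
all: try by rewrite !mulr_ge0 ?powR_ge0// addr_ge0 ?powR_ge0.
Qed.

Lemma Cst_gt0 : 0 < C1 + C2.
Proof.
have := rho_bounds => /andP[_ h].
have h1 : 0 < 1 - rho by rewrite subr_gt0.
have hC1 : 0 < C1.
  rewrite /C1 divr_gt0// !mulr_gt0 ?powR_gt0//.
  all: try by rewrite ltr_wpDr ?powR_ge0.
  all: try by rewrite mulr_gt0// ltr0n.
by apply: (lt_le_trans hC1); rewrite lerDl C2_ge0.
Qed.

Lemma final_u r : 0 < r ->
  (lebint (fun x => (if r <= enorm x
                     then `|u x| / (enorm x `^ (alpha - d%:R / q + delta)) else 0)%:E)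
     <= ((C1 + C2) / r `^ delta)%:E * Lqnorm q (riesz_conv alpha u))%E /\
  (lebint (fun x => (if enorm x < r
                     then `|u x| / (enorm x `^ (alpha - d%:R / q - delta)) else 0)%:E)
     <= ((C1 + C2) * r `^ delta)%:E * Lqnorm q (riesz_conv alpha u))%E.
Proof.
move=> r0.
have LqE : Lqnorm q (riesz_conv alpha u) = (P `^ q^-1)%E by [].
have q0 : 0 < q by exact: lt_trans ltr01 q1.
have Cp := Cst_gt0.
have rd0 : 0 < r `^ delta by rewrite powR_gt0.
rewrite LqE; case hP: P => [p| |].
- have p0 : 0 <= p by rewrite -lee_fin -hP P_ge0.
  rewrite poweR_EFin -!EFinM.
  have n0 : 0 <= p `^ q^-1 by exact: powR_ge0.
  split.
    apply: (le_trans (B1 _ _ hP r0)); rewrite lee_fin.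
    have -> : (2 `^ alpha * (2 * d%:R) `^ D * p `^ q^-1 * (1 + 2 `^ (D - delta)) * r `^ (- delta)) / (1 - rho)
        = C1 * (p `^ q^-1 * (r `^ delta)^-1) by rewrite /C1 powRN; ring.
    have -> : (C1 + C2) / r `^ delta * p `^ q^-1 = (C1 + C2) * (p `^ q^-1 * (r `^ delta)^-1) by ring.
    apply: ler_wpM2r; first by rewrite mulr_ge0// invr_ge0 ltW.
    by rewrite lerDl C2_ge0.
  apply: (le_trans (B2 _ _ hP r0)); rewrite lee_fin.
  have -> : ((4 * d%:R) `^ alpha * p `^ q^-1 * (1 + 2 `^ (alpha - D - delta)) * r `^ delta) / (1 - rho)
      = C2 * (p `^ q^-1 * r `^ delta) by rewrite /C2; ring.
  have -> : (C1 + C2) * r `^ delta * p `^ q^-1 = (C1 + C2) * (p `^ q^-1 * r `^ delta) by ring.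
  apply: ler_wpM2r; first by rewrite mulr_ge0// ltW.
  by rewrite lerDr C1_ge0.
- rewrite /= invr_eq0 (gt_eqF q0) !gt0_muley ?lte_fin ?divr_gt0 ?mulr_gt0//.
  by split; exact: leey.
- by have := P_ge0; rewrite hP.
Qed.


End main.

Theorem proposition2p2 (R : realType) (d : nat) (q alpha delta : R) :
  (1 <= d)%N -> 1 < q -> d%:R / q < alpha -> alpha < d%:R -> 0 < delta ->
  exists C : R, 0 < C /\
    forall (r : R) (u : d.-tuple R -> R), 0 < r -> measurable_fun setT u ->
      (lebint (fun x => (if r <= enorm x
                         then `|u x| / (enorm x `^ (alpha - d%:R / q + delta))
                         else 0)%:E)
         <= (C / r `^ delta)%:E * Lqnorm q (riesz_conv alpha u))%E /\
      (lebint (fun x => (if enorm x < r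
                         then `|u x| / (enorm x `^ (alpha - d%:R / q - delta))
                         else 0)%:E)
         <= (C * r `^ delta)%:E * Lqnorm q (riesz_conv alpha u))%E.
Proof.
move=> d1 q1 dqa ad de0.
have q0 : 0 < q by exact: lt_trans ltr01 q1.
have al0 : 0 < alpha.
  apply: le_lt_trans dqa; by rewrite divr_ge0 ?ler0n ?ltW.
exists (C1 (d := d) q alpha delta + C2 (d := d) q alpha delta); split.
  exact: Cst_gt0.
move=> r u r0 mu_.
exact: (final_u q alpha delta u d1 q1 al0 de0 mu_ r r0).
Qed.
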